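(* For every sequence $s$, $$\mathsf{Seq}\vdash\forall x\,\Big[x\sqsubseteq\overline{s}\;\leftrightarrow\;\bigvee_{t\in I(s)}x=\overline{t}\Big],$$ where $I(s)$ is the set of all initial segments of $s$.
   Context: $\mathcal{L}=\{e,\vdash,\circ\}$ with $e$ a constant and $\vdash$ (infix), $\circ$ binary function symbols. $\mathsf{Seq}$ is the $\mathcal{L}$-theory with axioms: ($\mathsf{Seq}_1$) $\forall xy[x\vdash y\neq e]$; ($\mathsf{Seq}_2$) $\forall x_1x_2y_1y_2[x_1\vdash x_2=y_1\vdash y_2\rightarrow(x_1=y_1\wedge x_2=y_2)]$; ($\mathsf{Seq}_3$) $\forall x[x\circ e=x]$; ($\mathsf{Seq}_4$) $\forall xyz[x\circ(y\vdash z)=(x\circ y)\vdash z]$; ($\mathsf{Seq}_5$) $\forall x[x=e\vee\exists yz[x=y\vdash z]]$. Sequences: $()$ is a sequence, and for $n>0$, if $s_1,\ldots,s_n$ are sequences then $(s_1,\ldots,s_n)$ is a sequence; the initial segments of $(s_1,\ldots,s_n)$ are $()$ and $(s_1,\ldots,s_k)$ for $1\le k\le n$. The sequeral $\overline{s}$ is the term with $\overline{()}=e$ and $\overline{(s_1,\ldots,s_n)}=(\ldots((e\vdash\overline{s_1})\vdash\overline{s_2})\ldots)\vdash\overline{s_n}$. $x\sqsubseteq t$ abbreviates $\exists y[x\circ y=t]$. *)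

(* Defs.v *)
From Stdlib Require Import List Arith.
Import ListNotations.

(* Sequences: () is a sequence; (s_1,...,s_n) with each s_i a sequence.
   [Sq l] represents the sequence whose entries are the elements of [l]
   (so [Sq []] is the empty sequence ()). *)
Inductive sequence : Type := Sq : list sequence -> sequence.

Definition initial_segment (t s : sequence) : Prop :=
  match s with
  | Sq l => exists k, k <= length l /\ t = Sq (firstn k l)
  end.

Record LStructure : Type := {
  carrier :> Type;
  s_e : carrier;
  s_vdash : carrier -> carrier -> carrier;
  s_circ : carrier -> carrier -> carrier
}.

Definition is_Seq_model (M : LStructure) : Prop :=
  (forall x y : M, s_vdash M x y <> s_e M) /\
  (forall x1 x2 y1 y2 : M,
      s_vdash M x1 x2 = s_vdash M y1 y2 -> x1 = y1 /\ x2 = y2) /\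
  (forall x : M, s_circ M x (s_e M) = x) /\
  (forall x y z : M, s_circ M x (s_vdash M y z) = s_vdash M (s_circ M x y) z) /\
  (forall x : M, x = s_e M \/ exists y z, x = s_vdash M y z).

Fixpoint sequeral (M : LStructure) (s : sequence) : M :=
  match s with
  | Sq l => fold_left (fun acc t => s_vdash M acc (sequeral M t)) l (s_e M)
  end.

Definition sqsub (M : LStructure) (x t : M) : Prop :=
  exists y : M, s_circ M x y = t.

(* Main.v *)
Require Import Defs.
From Stdlib Require Import List Arith Lia.
Import ListNotations.

Definition F (M : LStructure) (L : list M) : M :=
  fold_left (fun acc a => s_vdash M acc a) L (s_e M).

Lemma F_app1 (M : LStructure) (L : list M) a :
  F M (L ++ [a]) = s_vdash M (F M L) a.
Proof. unfold F. rewrite fold_left_app. reflexivity. Qed.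

Lemma seq_F (M : LStructure) (l : list sequence) :
  sequeral M (Sq l) = F M (map (sequeral M) l).
Proof.
  simpl. unfold F. generalize (s_e M). induction l as [|t l IH]; intro acc; simpl; auto.
Qed.

Lemma keyF (M : LStructure) (HM : is_Seq_model M) (L : list M) :
  forall x, sqsub M x (F M L) <-> exists k, k <= length L /\ x = F M (firstn k L).
Proof.
  destruct HM as [H1 [H2 [H3 [H4 H5]]]].
  induction L as [|a L IH] using rev_ind; intro x; split.
  - intros [y Hy]. exists 0. split; [simpl; lia|]. simpl.
    destruct (H5 y) as [->|[y1 [y2 ->]]].
    + rewrite H3 in Hy. exact Hy.
    + rewrite H4 in Hy. exfalso; exact (H1 _ _ Hy).
  - intros [k [Hk ->]]. simpl in Hk. assert (k = 0) by lia. subst. exists (s_e M). apply H3.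
  - intros [y Hy]. rewrite F_app1 in Hy.
    destruct (H5 y) as [->|[y1 [y2 ->]]].
    + rewrite H3 in Hy. exists (length (L ++ [a])). split; [lia|].
      rewrite firstn_all. rewrite F_app1. exact Hy.
    + rewrite H4 in Hy. apply H2 in Hy. destruct Hy as [Hy _].
      destruct (proj1 (IH x) (ex_intro _ y1 Hy)) as [k [Hk ->]].
      exists k. split; [rewrite length_app; lia|].
      rewrite firstn_app. replace (k - length L) with 0 by lia. simpl. rewrite app_nil_r. reflexivity.
  - intros [k [Hk ->]]. rewrite length_app in Hk. simpl in Hk.
    destruct (Nat.eq_dec k (length L + 1)) as [E|E].
    + subst. replace (length L + 1) with (length (L ++ [a])) by (rewrite length_app; reflexivity).
      rewrite firstn_all. exists (s_e M). apply H3.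
    + rewrite firstn_app. replace (k - length L) with 0 by lia. simpl. rewrite app_nil_r.
      destruct (proj2 (IH (F M (firstn k L)))) as [y Hy].
      { exists k. split; [lia|reflexivity]. }
      exists (s_vdash M y a). rewrite H4, Hy, F_app1. reflexivity.
Qed.

Theorem lemma2 :
  forall (M : LStructure), is_Seq_model M ->
  forall (s : sequence) (x : M),
    sqsub M x (sequeral M s) <->
    exists t : sequence, initial_segment t s /\ x = sequeral M t.
Proof.
  intros M HM [l] x. rewrite seq_F, keyF by exact HM. rewrite length_map.
  split.
  - intros [k [Hk ->]]. exists (Sq (firstn k l)). split.
    + exists k. auto.
    + rewrite seq_F, firstn_map. reflexivity.
  - intros [t [[k [Hk ->]] ->]]. exists k. split; auto.
    rewrite seq_F, firstn_map. reflexivity.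
Qed.
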